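(* There are infinitely many odd positive integers $N$ for which there are no palindromic numbers $A,B$ with $N=A/B$.
   Context: A positive integer $n$ is palindromic if its binary representation (most significant digit first, no leading zeros) reads the same forwards and backwards. *)

(* Defs.v *)
From mathcomp Require Import all_boot.
Set Implicit Arguments. Unset Strict Implicit. Unset Printing Implicit Defensive.

(* Binary digits of n, least significant first, no leading zeros
   (bits 0 = [::]). Fuel n suffices since n halves each step. *)
Fixpoint bits_aux (fuel n : nat) : seq bool :=
  match fuel with
  | 0 => [::]
  | f.+1 => if n == 0 then [::] else odd n :: bits_aux f n./2
  end.
Definition bits (n : nat) : seq bool := bits_aux n n.

Definition palindromic (n : nat) : bool := (0 < n) && (rev (bits n) == bits n).

(* Main.v *)
Require Import Defs.
From mathcomp Require Import all_boot zify.
Lemma nth_bits_aux f n i : n <= f -> nth false (bits_aux f n) i = odd (n %/ 2^i).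
Proof.
elim: f n i => [|f IH] n i /=.
  by rewrite leqn0 => /eqP ->; rewrite div0n nth_nil.
move=> hn; case: eqP => [->|/eqP n0]; first by rewrite div0n nth_nil.
case: i => [|i] /=; first by rewrite expn0 divn1.
rewrite IH; last by rewrite -divn2; apply/leP; move/leP: hn; move/eqP: n0 => n0; lia.
by rewrite expnS divnMA divn2.
Qed.
Lemma size_bits_aux f n : n <= f ->
  n < 2^(size (bits_aux f n)) /\ (0 < n -> 2^(size (bits_aux f n)) <= n.*2).
Proof.
elim: f n => [|f IH] n /=.
  by rewrite leqn0 => /eqP ->.
move=> hn; case: eqP => [->|/eqP n0] //=.
have h2 : n./2 <= f by rewrite -divn2; apply/leP; move/leP: hn; move/eqP: n0 => n0; lia.
have [h3 h4] := IH _ h2.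
have e : n = n./2.*2 + odd n by rewrite addnC odd_double_half.
case: (posnP n./2) => hp.
  have : bits_aux f n./2 = [::] by rewrite hp; case: (f).
  move=> -> /=; rewrite expn1; split; lia.
have := h4 hp; rewrite expnS; split; lia.
Qed.

Lemma pal_props X : palindromic X ->
  let n := size (bits X) in
  [/\ 0 < n, 2^n <= X.*2, X < 2^n &
      forall i, i < n -> odd (X %/ 2^i) = odd (X %/ 2^(n - i.+1))].
Proof.
move=> /andP [X0 /eqP hr] n.
have [h1 h2] := @size_bits_aux X X (leqnn X).
have hn : 0 < n.
  rewrite /n; case: (posnP (size (bits X))) => // e.
  by move: h1; rewrite /bits e expn0 ltnS leqn0 => /eqP e'; rewrite e' in X0.
split => //; first exact: h2.
move=> i hi.
rewrite -!(@nth_bits_aux X X _ (leqnn X)) -/(bits X).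
by rewrite -{1}hr nth_rev.
Qed.

Lemma top3 X p : 2^p.+3 <= X.*2 -> X < 2^p.+3 ->
  (forall i, i < p.+3 -> odd (X %/ 2^i) = odd (X %/ 2^(p.+3 - i.+1))) ->
  X %/ 2^p = 4 + 2 * odd (X %/ 2) + odd (X %/ 4).
Proof.
move=> h1 h2 hs.
have e8 : 2^p.+3 = 2^p * 8 by rewrite !expnS; lia.
have P0 : 0 < 2^p by rewrite expn_gt0.
have hy1 : X %/ 2^p < 8 by rewrite ltn_divLR //; lia.
have hy2 : 4 <= X %/ 2^p by rewrite leq_divRL //; lia.
have s2 := hs 2 isT. have s1 := hs 1 isT.
have e3 : p.+3 - 3 = p by lia. rewrite e3 in s2.
have e2 : p.+3 - 2 = p.+1 by lia. rewrite e2 in s1.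
rewrite [2^p.+1]expnSr divnMA in s1.
rewrite (_ : 4 = 2^2) // s2 (_ : 2 = 2^1) // s1 -!modn2.
lia.
Qed.

Lemma pal_odd X : palindromic X -> odd X.
Proof.
move=> hX; have [hn h1 h2 hs] := @pal_props X hX.
have := hs 0 hn; rewrite expn0 divn1 => ->.
set n := size (bits X) in hn h1 h2 hs *.
have -> : X %/ 2^(n - 1) = 1; last by [].
have e : 2^n = 2^(n-1) * 2 by rewrite -expnSr; congr (expn 2 _); lia.
have P0 : 0 < 2^(n-1) by rewrite expn_gt0.
apply/eqP; rewrite eqn_leq; apply/andP; split.
  by rewrite -ltnS ltn_divLR //; lia.
by rewrite leq_divRL //; lia.
Qed.

Lemma exp_lt x z y : 2^x <= y -> y < 2^z -> x < z.
Proof. move=> h1 h2; rewrite -(@ltn_exp2l 2) //; exact: leq_ltn_trans h1 h2. Qed.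

Lemma low3 X : X = 8 * (X %/ 8) + X %% 2 + 2 * ((X %/ 2) %% 2) + 4 * ((X %/ 4) %% 2).
Proof. lia. Qed.

Lemma arith1 A B u W KB KR TA TB a1 a2 b1 b2 :
  a1 < 2 -> a2 < 2 -> b1 < 2 -> b2 < 2 -> a1 = 1 - b1 -> a2 = b2 ->
  TA = 4 + 2*a1 + a2 -> TB = 4 + 2*b1 + b2 ->
  A = KB + 3*B -> KB = TB*W + KR -> KR < W -> 32*u <= W -> B < 8*u ->
  TA*W <= A -> A < TA*W + W -> False.
Proof.
move=> ha1 ha2 hb1 hb2 e1 e2 eA eB.
have: b1 = 0 \/ b1 = 1 by lia. have: b2 = 0 \/ b2 = 1 by lia.
case=> ? [] ?; subst; lia.
Qed.

Lemma arith2 A B u W KB KR TA TB a1 a2 b1 b2 :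
  a1 < 2 -> a2 < 2 -> b1 < 2 -> b2 < 2 -> a1 = 1 - b1 -> a2 = b2 ->
  TA = 4 + 2*a1 + a2 -> TB = 4 + 2*b1 + b2 ->
  A = KB + 3*B -> KB = TB*W + KR -> KR < W -> 32*u <= W -> B < 8*u ->
  TA*(2*W) <= A -> A < TA*(2*W) + 2*W -> False.
Proof.
move=> ha1 ha2 hb1 hb2 e1 e2 eA eB.
have: b1 = 0 \/ b1 = 1 by lia. have: b2 = 0 \/ b2 = 1 by lia.
case=> ? [] ?; subst; lia.
Qed.

Lemma no_pal k A B : 5 <= k -> palindromic A -> palindromic B ->
  A = (2^k + 3) * B -> False.
Proof.
move=> hk hA hB eAB.
set K := 2^k in eAB.
have K32 : 32 <= K by rewrite /K (_ : 32 = 2^5) // leq_exp2l.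
have [K' eK] : exists K', K = 8 * K'.
  exists (2^(k-3)); rewrite /K -{1}(subnK (_ : 3 <= k)) ?expnD ?[_ * 2^3]mulnC //; lia.
have oA := @pal_odd A hA. have oB := @pal_odd B hB.
have lA := low3 A. have lB := low3 B.
rewrite modn2 oA in lA. rewrite modn2 oB in lB.
have eAB' : A = 8 * (K' * B) + 3 * B by rewrite eAB eK; lia.
set a1 := (A %/ 2) %% 2 in lA. set a2 := (A %/ 4) %% 2 in lA.
set b1 := (B %/ 2) %% 2 in lB. set b2 := (B %/ 4) %% 2 in lB.
have ha1 : a1 < 2 by rewrite ltn_pmod. have ha2 : a2 < 2 by rewrite ltn_pmod.
have hb1 : b1 < 2 by rewrite ltn_pmod. have hb2 : b2 < 2 by rewrite ltn_pmod.
have e1 : a1 = 1 - b1 by lia.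
have e2 : a2 = b2 by lia.
have K0 : 0 < K by lia.
have [nB0 hB1 hB2 hBs] := @pal_props B hB.
have [nA0 hA1 hA2 hAs] := @pal_props A hA.
set nB := size (bits B) in nB0 hB1 hB2 hBs.
set nA := size (bits A) in nA0 hA1 hA2 hAs.
case: (leqP 3 nB) => hnB.
  have [q eq] : exists q, nB = q.+3 by exists (nB - 3); lia.
  rewrite eq in hB1 hB2 hBs.
  have tB := @top3 B q hB1 hB2 hBs.
  rewrite -!modn2 in tB.
  set u := 2^q in tB.
  have u0 : 0 < u by rewrite expn_gt0.
  have e8 : 2^q.+3 = 8 * u by rewrite !expnS; lia.
  have eB := divn_eq B u.
  set TB := B %/ u in tB eB.
  have hr : B %% u < u by rewrite ltn_pmod.
  set W := u * K.
  have eW : 2^(q + k) = W by rewrite expnD.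
  have KB : K * B = TB * W + K * (B %% u) by rewrite {1}eB /W; lia.
  have KR : K * (B %% u) < W by rewrite /W [K * _]mulnC ltn_pmul2r.
  have W32 : 32 * u <= W by rewrite /W mulnC leq_mul2l K32 orbT.
  have KBl : 4 * W <= K * B.
    have h4 : 4 * u <= B by move: hB2; rewrite e8; lia.
    by rewrite /W mulnA mulnC leq_mul2l h4 orbT.
  have KBu : K * B < 8 * W.
    have h8 : B < 8 * u by rewrite -e8.
    by rewrite /W mulnA mulnC ltn_pmul2r.
  have eA3 : A = K * B + 3 * B by rewrite eAB mulnDl.
  have h8 : B < 8 * u by rewrite -e8.
  have l1 : q + k + 2 < nA.
    apply: (@exp_lt _ _ A); last by [].
    rewrite expnD eW (_ : 2^2 = 4) //.
    move: eA3 KBl; clear; generalize (K * B) => x; lia.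
  have l2 : nA < q + k + 5.
    apply: (@exp_lt _ _ A.*2); first by [].
    rewrite expnD eW (_ : 2^5 = 32) //.
    move: eA3 KBu W32 h8; clear; generalize (K * B) => x; lia.
  have [enA|enA] : nA = (q + k).+3 \/ nA = (q + k + 1).+3.
    by move: l1 l2; clear; lia.
    rewrite enA in hA1 hA2 hAs.
    have tA := @top3 A (q + k) hA1 hA2 hAs.
    rewrite -!modn2 eW in tA.
    have eA := divn_eq A W. have hrA : A %% W < W by rewrite ltn_pmod // /W muln_gt0 u0.
    have [i1 i2] : A %/ W * W <= A /\ A < A %/ W * W + W.
      by move: eA hrA; clear; generalize (A %/ W) (A %% W) => x y; lia.
    exact: (@arith1 A B u W (K * B) (K * (B %% u)) (A %/ W) TB a1 a2 b1 b2
      ha1 ha2 hb1 hb2 e1 e2 tA tB eA3 KB KR W32 h8 i1 i2).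
  rewrite enA in hA1 hA2 hAs.
  have tA := @top3 A (q + k + 1) hA1 hA2 hAs.
  have eW2 : 2^(q + k + 1) = 2 * W by rewrite addn1 expnS eW.
  rewrite -!modn2 eW2 in tA.
  have eA := divn_eq A (2 * W).
  have hrA : A %% (2 * W) < 2 * W by rewrite ltn_pmod // /W !muln_gt0 u0.
  have [i1 i2] : A %/ (2 * W) * (2 * W) <= A /\ A < A %/ (2 * W) * (2 * W) + 2 * W.
    by move: eA hrA; clear; generalize (A %/ (2 * W)) (A %% (2 * W)) => x y; lia.
  exact: (@arith2 A B u W (K * B) (K * (B %% u)) (A %/ (2 * W)) TB a1 a2 b1 b2
    ha1 ha2 hb1 hb2 e1 e2 tA tB eA3 KB KR W32 h8 i1 i2).
have B4 : B < 4.
  apply: (leq_trans hB2); rewrite (_ : 4 = 2^2) // leq_exp2l //; lia.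
have eA3 : A = K * B + 3 * B by rewrite eAB mulnDl.
have [eB1|eB1] : B = 1 \/ B = 3.
  by move: B4 oB; clear; case: B => [|[|[|[|]]]] //; auto.
  have eA1 : A = K + 3 by rewrite eA3 eB1 muln1.
  have [i1 i2] : a1 = 1 /\ a2 = 0 by move: lB eB1 e1 e2 ha1 ha2 hb1 hb2; clear; lia.
  have l1 : k < nA by apply: (@exp_lt _ _ A) => //; lia.
  have l2 : nA < k + 2.
    apply: (@exp_lt _ _ A.*2) => //; rewrite expnD -/K (_ : 2^2 = 4) //; lia.
  have enA : nA = (k - 2).+3 by lia.
  rewrite enA in hA1 hA2 hAs.
  have tA := @top3 A (k - 2) hA1 hA2 hAs.
  rewrite -!modn2 -/a1 -/a2 i1 i2 in tA.
  have eV : K = 4 * 2^(k-2).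
    by rewrite /K -{1}(subnK (_ : 2 <= k)) ?expnD ?[_ * 2^2]mulnC //; lia.
  have eA := divn_eq A (2^(k-2)).
  rewrite tA in eA.
  move: eA eA1 eV K32; clear; generalize (2^(k-2)) (A %% 2^(k-2)) => x y; lia.
have eA1 : A = 3 * K + 9 by rewrite eA3 eB1 mulnC.
have [i1 i2] : a1 = 0 /\ a2 = 0 by move: lB eB1 e1 e2 ha1 ha2 hb1 hb2; clear; lia.
have l1 : k.+1 < nA.
  apply: (@exp_lt _ _ A) => //; rewrite expnS -/K; lia.
have l2 : nA < k + 3.
  apply: (@exp_lt _ _ A.*2) => //; rewrite expnD -/K (_ : 2^3 = 8) //; lia.
have enA : nA = (k - 1).+3 by lia.
rewrite enA in hA1 hA2 hAs.
have tA := @top3 A (k - 1) hA1 hA2 hAs.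
rewrite -!modn2 -/a1 -/a2 i1 i2 in tA.
have eV : K = 2 * 2^(k-1).
  by rewrite /K -{1}(subnK (_ : 1 <= k)) ?expnD ?[_ * 2^1]mulnC //; lia.
have eA := divn_eq A (2^(k-1)).
have hrA : A %% 2^(k-1) < 2^(k-1) by rewrite ltn_pmod // expn_gt0.
rewrite tA in eA.
move: eA hrA eA1 eV K32; clear; generalize (2^(k-1)) (A %% 2^(k-1)) => x y; lia.
Qed.

Theorem theorem8 :
  forall m : nat, exists N : nat,
    m < N /\ odd N /\
    ~ (exists A B : nat, palindromic A /\ palindromic B /\ A = N * B).
Proof.
move=> m; exists (2^(m + 5) + 3); split; last split.
- have := ltn_expl (m + 5) (isT : 1 < 2); lia.
- by rewrite oddD oddX addnS.
- move=> [A [B [hA [hB e]]]]; apply: (@no_pal (m + 5) A B _ hA hB e); lia.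
Qed.
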